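(* Let $r\ge 3$ and let $\mathbb{P}^m_r$ be an $r$-uniform hyperpath with $m$ edges. Then $\lambda(\mathbb{P}^m_r)=2r-2$ if $m=1$, $\lambda(\mathbb{P}^m_r)=2r-1$ if $m=2$, and $\lambda(\mathbb{P}^m_r)=2r$ if $m\ge 3$.
   Context: An $r$-uniform hypergraph (every edge has exactly $r$ vertices) with $m$ edges is a hyperpath $\mathbb{P}^m_r$ if its edges can be ordered $e_1,\dots,e_m$ and there are vertices $v_1,\dots,v_{m-1}$ such that for $1\le i<j\le m$, $e_i\cap e_j=\emptyset$ if $j\ne i+1$ and $e_i\cap e_{i+1}=\{v_i\}$; its vertex set is the union of its edges. An $L(2,1)$-colouring of a hypergraph $\mathbb{H}=(V,E)$ is a map $f:V\to\mathbb{Z}_{\ge 0}$ such that $|f(u)-f(v)|\ge 2$ whenever $u\ne v$ lie in a common edge, and $|f(u)-f(v)|\ge 1$ whenever there are edges $e_1\ni v$, $e_2\ni u$ with $(e_1\cap e_2)\setminus\{u,v\}\ne\emptyset$. Its span is $\max f-\min f$, and $\lambda(\mathbb{H})$ is the minimum span. *)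

(* Defs.v *)
From mathcomp Require Import all_boot.
Set Implicit Arguments. Unset Strict Implicit. Unset Printing Implicit Defensive.

Definition covers (V : finType) (m : nat) (e : 'I_m -> {set V}) : Prop :=
  forall v : V, exists i : 'I_m, v \in e i.

Definition uniform (V : finType) (m r : nat) (e : 'I_m -> {set V}) : Prop :=
  forall i : 'I_m, #|e i| = r.

Definition hyperpath_order (V : finType) (m : nat) (e : 'I_m -> {set V}) : Prop :=
  forall i j : 'I_m, i < j ->
    (j != i.+1 :> nat -> e i :&: e j = set0) /\
    (j = i.+1 :> nat -> exists v : V, e i :&: e j = [set v]).

Definition is_hyperpath (V : finType) (m r : nat) (E : {set {set V}}) : Prop :=
  #|E| = m /\ (forall A, A \in E -> #|A| = r) /\
  (forall v : V, exists2 A, A \in E & v \in A) /\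
  exists e : 'I_m -> {set V}, (forall i, e i \in E) /\ injective e /\
    hyperpath_order e.

Definition natdist (a b : nat) : nat := (a - b) + (b - a).

Definition L21 (V : finType) (E : {set {set V}}) (f : V -> nat) : Prop :=
  (forall u v : V, u != v -> (exists2 A, A \in E & (u \in A) && (v \in A)) ->
     2 <= natdist (f u) (f v)) /\
  (forall u v : V, u != v ->
     (exists e1 e2, [/\ e1 \in E, e2 \in E, v \in e1, u \in e2 &
                       (e1 :&: e2) :\: [set u; v] != set0]) ->
     1 <= natdist (f u) (f v)).

Definition fmax (V : finType) (f : V -> nat) : nat := \max_(v : V) f v.
Definition fmin (V : finType) (f : V -> nat) : nat :=
  \big[minn/fmax f]_(v : V) f v.
Definition span (V : finType) (f : V -> nat) : nat := fmax f - fmin f.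

Definition is_lambda (V : finType) (E : {set {set V}}) (k : nat) : Prop :=
  (exists f : V -> nat, L21 E f /\ span f = k) /\
  (forall f : V -> nat, L21 E f -> k <= span f).

(* Main.v *)
Require Import Defs.
From mathcomp Require Import all_boot zify.
Set Implicit Arguments. Unset Strict Implicit. Unset Printing Implicit Defensive.

Lemma pigeon (T : finType) (S : {set T}) (h : T -> nat) n :
  {in S &, injective h} -> (forall v, v \in S -> h v < n) ->
  #|S| <= n /\ (#|S| = n -> forall j, j < n -> exists2 v, v \in S & h v = j).
Proof.
move=> hi hb.
have us : uniq (map h (enum S)).
  rewrite map_inj_in_uniq ?enum_uniq // => x y; rewrite !mem_enum; exact: hi.
have sub : {subset map h (enum S) <= iota 0 n}.
  move=> x /mapP [y]; rewrite mem_enum => yS ->; rewrite mem_iota add0n; exact: hb.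
have sz : size (map h (enum S)) = #|S| by rewrite size_map cardE.
split; first by rewrite -sz -(size_iota 0 n); exact: uniq_leq_size.
move=> Sn j jn.
have szle : size (iota 0 n) <= size (map h (enum S)) by rewrite size_iota sz Sn.
have [_ eqs] := uniq_min_size us sub szle.
have : j \in iota 0 n by rewrite mem_iota.
rewrite -eqs => /mapP [v]; rewrite mem_enum => vS ->; by exists v.
Qed.

Lemma mono_le (r : nat) (a : nat -> bool) :
  (forall j, j.+1 < r -> a j -> a j.+1) ->
  forall j k, j <= k -> k < r -> a j -> a k.
Proof.
move=> ha j; elim=> [|k IH] jk kr aj.
  by move: jk; rewrite leqn0 => /eqP <-.
move: jk; rewrite leq_eqVlt => /orP [/eqP <- // | jk].
apply: ha => //; apply: IH => //; lia.
Qed.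

Lemma bits_const (r j0 : nat) (a b : nat -> bool) :
  (forall j, j.+1 < r -> a j -> a j.+1) ->
  (forall j, j.+1 < r -> b j -> b j.+1) ->
  (forall j, j < r -> j != j0 -> a j = ~~ b j) ->
  forall j k, j < r -> k < r -> j != j0 -> k != j0 -> b j = b k.
Proof.
move=> ha hb hab.
have key : forall j k, j <= k -> k < r -> j != j0 -> k != j0 -> b j = b k.
  move=> j k jk kr jn kn; apply/idP/idP => H.
    exact: (mono_le hb jk).
  apply/negPn/negP => bj.
  have : a j by rewrite hab //; lia.
  by move/(mono_le ha jk kr); rewrite hab // H.
move=> j k jr kr jn kn; case: (leqP j k) => jk; first exact: key.
symmetry; apply: key => //; lia.
Qed.

Lemma bits_contra (r j0 j1 : nat) (a b c : nat -> bool) :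
  2 < r -> j0 < r -> j1 < r -> j0 != j1 ->
  (forall j, j.+1 < r -> a j -> a j.+1) ->
  (forall j, j.+1 < r -> b j -> b j.+1) ->
  (forall j, j.+1 < r -> c j -> c j.+1) ->
  (forall j, j < r -> j != j0 -> a j = ~~ b j) -> a j0 = b j0 ->
  (forall j, j < r -> j != j1 -> c j = ~~ b j) -> c j1 = b j1 -> False.
Proof.
move=> r2 j0r j1r j01 ha hb hc hab ab0 hcb cb1.
have [k0 [k0r k0a k0b]] : exists k0, [/\ k0 < r, k0 != j0 & k0 != j1].
  case: (eqVneq j0 0) => [e0|n0].
    case: (eqVneq j1 1) => [e1|n1]; first by exists 2; split; lia.
    by exists 1; split; lia.
  case: (eqVneq j1 0) => [e1|n1].
    case: (eqVneq j0 1) => [e2|n2]; first by exists 2; split; lia.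
    by exists 1; split; lia.
  by exists 0; split; lia.
have bc : forall j, j < r -> b j = b k0.
  move=> j jr; case: (eqVneq j j0) => [ej|nj].
    have nj1 : j != j1 by rewrite ej.
    exact: (bits_const hc hb hcb).
  exact: (bits_const ha hb hab).
case Hb : (b k0).
  have aj0 : a j0 by rewrite ab0 bc.
  have cj1 : c j1 by rewrite cb1 bc.
  have e0 : j0 = r.-1.
    apply/eqP; apply/negPn/negP => ne.
    have l1 : j0 <= r.-1 by lia.
    have l2 : r.-1 < r by lia.
    have := mono_le ha l1 l2 aj0.
    by rewrite hab ?bc ?Hb // eq_sym.
  have e1 : j1 = r.-1.
    apply/eqP; apply/negPn/negP => ne.
    have l1 : j1 <= r.-1 by lia.
    have l2 : r.-1 < r by lia.
    have := mono_le hc l1 l2 cj1.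
    by rewrite hcb ?bc ?Hb // eq_sym.
  by move: j01; rewrite e0 e1 eqxx.
have aj0 : ~~ a j0 by rewrite ab0 bc ?Hb.
have cj1 : ~~ c j1 by rewrite cb1 bc ?Hb.
have e0 : j0 = 0.
  apply/eqP; apply/negPn/negP => ne.
  have a0 : a 0 by rewrite hab ?bc ?Hb //; lia.
  by move: aj0; rewrite (mono_le ha (leq0n j0) j0r a0).
have e1 : j1 = 0.
  apply/eqP; apply/negPn/negP => ne.
  have c0 : c 0 by rewrite hcb ?bc ?Hb //; lia.
  by move: cj1; rewrite (mono_le hc (leq0n j1) j1r c0).
by move: j01; rewrite e0 e1 eqxx.
Qed.

Section HP.
Variables (V : finType) (m r : nat) (e : 'I_m -> {set V}).
Hypothesis Hp : hyperpath_order e.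

Definition ee (n : nat) : {set V} :=
  if (insub n : option 'I_m) is Some i then e i else set0.

Lemma eeE (i : 'I_m) : ee i = e i.
Proof. by rewrite /ee valK. Qed.

Lemma ee0 n : m <= n -> ee n = set0.
Proof. by move=> h; rewrite /ee insubF // ltnNge h. Qed.

Lemma ee_disj i j : i < j -> j != i.+1 -> ee i :&: ee j = set0.
Proof.
move=> ij jn; case: (ltnP j m) => jm; last by rewrite (ee0 jm) setI0.
have im : i < m by lia.
have := (@Hp (Ordinal im) (Ordinal jm) ij).1 jn.
by rewrite -!eeE.
Qed.

Lemma ee_w i : i.+1 < m -> exists w, ee i :&: ee i.+1 = [set w].
Proof.
move=> h; have im : i < m by lia.
have [w hw] := (@Hp (Ordinal im) (Ordinal h) (ltnSn i)).2 erefl.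
by exists w; rewrite (eeE (Ordinal im)) (eeE (Ordinal h)).
Qed.

Lemma ee_cases i j v : v \in ee i -> v \in ee j ->
  [\/ i = j, j = i.+1 | i = j.+1].
Proof.
move=> vi vj; case: (ltngtP i j) => [ij|ji|->]; last by constructor 1.
  case: (eqVneq j i.+1) => [->|jn]; first by constructor 2.
  by have := ee_disj ij jn; move/setP/(_ v); rewrite inE vi vj inE.
case: (eqVneq i j.+1) => [->|jn]; first by constructor 3.
by have := ee_disj ji jn; move/setP/(_ v); rewrite inE vi vj inE.
Qed.

Lemma ee_nonempty i v : v \in ee i -> i < m.
Proof. by move=> vi; case: (ltnP i m) => // h; move: vi; rewrite ee0 ?inE. Qed.

Lemma ee_shared i v w : ee i :&: ee i.+1 = [set w] -> v \in ee i -> v \in ee i.+1 -> v = w.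
Proof. by move=> hw vi vj; apply/set1P; rewrite -hw inE vi vj. Qed.

End HP.

Section Lower.
Variables (V : finType) (m r : nat) (e : 'I_m -> {set V}).
Hypothesis Hp : hyperpath_order e.
Hypothesis Hsz : forall i : 'I_m, #|e i| = r.
Variable g : V -> nat.
Hypothesis G1 : forall i u v, u != v -> u \in ee e i -> v \in ee e i ->
  2 <= natdist (g u) (g v).
Hypothesis G2 : forall i u v, u != v -> u \in ee e i -> v \in ee e i.+1 ->
  1 <= natdist (g u) (g v).

Lemma eeS i : i < m -> #|ee e i| = r.
Proof. by move=> h; rewrite (eeE e (Ordinal h)). Qed.

Lemma half_inj i : {in ee e i &, injective (fun v => g v %/ 2)}.
Proof.
move=> u v ui vi /= h; apply/eqP; apply/negPn/negP => nuv.
have := G1 nuv ui vi; rewrite /natdist; lia.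
Qed.

Definition used i c := [exists v, (v \in ee e i) && (g v == c)].

Lemma usedP i c : reflect (exists2 v, v \in ee e i & g v = c) (used i c).
Proof.
apply: (iffP existsP) => [[v /andP [vi /eqP gv]] | [v vi gv]]; first by exists v.
by exists v; rewrite vi gv eqxx.
Qed.

Lemma slot_surj i n : i < m -> (forall v, v \in ee e i -> g v %/ 2 < n) -> r = n ->
  forall j, j < n -> exists2 v, v \in ee e i & g v %/ 2 = j.
Proof.
move=> im hb rn; have [_ H] := pigeon (@half_inj i) hb.
by apply: H; rewrite eeS.
Qed.

Lemma U2 i c : ~~ (used i c && used i c.+1).
Proof.
apply/negP => /andP [/usedP [u ui gu] /usedP [v vi gv]].
have nuv : u != v by apply/negP => /eqP euv; move: gv; rewrite -euv gu; lia.
by have := G1 nuv ui vi; rewrite gu gv /natdist; lia.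
Qed.

Lemma U3 i c w : ee e i :&: ee e i.+1 = [set w] -> used i c -> used i.+1 c -> c = g w.
Proof.
move=> hw /usedP [u ui gu] /usedP [v vi gv].
case: (eqVneq u v) => [euv | nuv].
  by rewrite -(ee_shared hw ui) // euv.
by have := G2 nuv ui vi; rewrite gu gv /natdist; lia.
Qed.

Section Bound.
Hypothesis Hb : forall v, g v < 2 * r.

Lemma U1 i j : i < m -> j < r -> used i (2 * j) || used i (2 * j).+1.
Proof.
move=> im jr.
have hb : forall v, v \in ee e i -> g v %/ 2 < r by move=> v _; have := Hb v; lia.
have [v vi gv] := slot_surj im hb erefl jr.
case: (eqVneq (g v) (2 * j)) => h.
  by apply/orP; left; apply/usedP; exists v.
by apply/orP; right; apply/usedP; exists v => //; lia.
Qed.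

Lemma Umono i j : i < m -> j.+1 < r -> used i (2 * j).+1 -> used i (2 * j.+1).+1.
Proof.
move=> im jr h.
have := U2 i (2 * j).+1; rewrite h /= => h2.
have := U1 im jr; rewrite (_ : 2 * j.+1 = (2 * j).+2) ?(negbTE h2) //; lia.
Qed.

Lemma Ucomp i w j : i.+1 < m -> ee e i :&: ee e i.+1 = [set w] -> j < r ->
  j != g w %/ 2 -> used i.+1 (2 * j).+1 = ~~ used i (2 * j).+1.
Proof.
move=> im hw jr jn.
case A: (used i (2 * j).+1); case B: (used i.+1 (2 * j).+1) => //=.
  by have := U3 hw A B => h; move: jn; rewrite -h; lia.
have im' : i < m by lia.
have := U1 im' jr; have := U1 im jr; rewrite A B !orbF => A' B'.
by have := U3 hw B' A' => h; move: jn; rewrite -h; lia.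
Qed.

Lemma Ueq i w : i.+1 < m -> ee e i :&: ee e i.+1 = [set w] ->
  used i.+1 (2 * (g w %/ 2)).+1 = used i (2 * (g w %/ 2)).+1.
Proof.
move=> im hw.
have wi : w \in ee e i :&: ee e i.+1 by rewrite hw set11.
move: wi; rewrite inE => /andP [wi wj].
have ui : used i (g w) by apply/usedP; exists w.
have uj : used i.+1 (g w) by apply/usedP; exists w.
case: (boolP (odd (g w))) => od.
  have -> : (2 * (g w %/ 2)).+1 = g w.
    have : g w %% 2 = 1 by rewrite modn2 od.
    lia.
  by rewrite ui uj.
have ev : 2 * (g w %/ 2) = g w.
    have : g w %% 2 = 0 by rewrite modn2 (negbTE od).
  lia.
have := U2 i (2 * (g w %/ 2)); have := U2 i.+1 (2 * (g w %/ 2)).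
by rewrite ev ui uj /= => /negbTE -> /negbTE ->.
Qed.

Lemma lower3 : 3 <= m -> 3 <= r -> False.
Proof.
move=> m3 r3.
have h1 : 1 < m by lia.
have h2 : 2 < m by lia.
have [w0 hw0] := ee_w Hp (i:=0) h1.
have [w1 hw1] := ee_w Hp (i:=1) h2.
have w0i : w0 \in ee e 0 :&: ee e 1 by rewrite hw0 set11.
have w1i : w1 \in ee e 1 :&: ee e 2 by rewrite hw1 set11.
have j01 : g w0 %/ 2 != g w1 %/ 2.
  apply/negP => /eqP h.
  move: w0i w1i; rewrite !inE => /andP [a0 a1] /andP [b1 b2].
  have ew := half_inj a1 b1 h.
  have := ee_disj Hp (isT : 0 < 2) isT; move/setP/(_ w0).
  by rewrite !inE a0 ew b2.
apply: (@bits_contra r (g w0 %/ 2) (g w1 %/ 2)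
  (fun j => used 0 (2 * j).+1) (fun j => used 1 (2 * j).+1)
  (fun j => used 2 (2 * j).+1)) => //.
- by have := Hb w0; lia.
- by have := Hb w1; lia.
- by move=> j jr; apply: Umono => //; lia.
- by move=> j jr; apply: Umono => //; lia.
- by move=> j jr; apply: Umono => //; lia.
- by move=> j jr jn /=; rewrite (Ucomp h1 hw0 jr jn) negbK.
- by rewrite /= (Ueq h1 hw0).
- by move=> j jr jn /=; rewrite (Ucomp h2 hw1 jr jn).
- by rewrite /= (Ueq h2 hw1).
Qed.
End Bound.

Lemma lower2 : m = 2 -> 3 <= r -> (forall v, g v < (2 * r).-1) -> False.
Proof.
move=> m2 r3 hb.
have Hb : forall v, g v < 2 * r by move=> v; have := hb v; lia.
have h1 : 1 < m by lia.
have [w hw] := ee_w Hp (i:=0) h1.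
have hs : forall i, i < m -> forall v, v \in ee e i -> g v %/ 2 < r.
  by move=> i _ v _; have := Hb v; lia.
have top : forall i, i < m -> used i (2 * r - 2).
  move=> i im; have rr : r.-1 < r by lia.
  have [v vi gv] := slot_surj im (hs i im) erefl rr.
  apply/usedP; exists v => //; have := hb v; lia.
have h0 : 0 < m by lia.
have gw := U3 hw (top 0 h0) (top 1 h1).
have wi : w \in ee e 0 :&: ee e 1 by rewrite hw set11.
move: wi; rewrite inE => /andP [w0 w1].
have nxt : forall i, i < m -> w \in ee e i -> used i (2 * r - 4).
  move=> i im wi.
  have rr : r.-2 < r by lia.
  have [v vi gv] := slot_surj im (hs i im) erefl rr.
  apply/usedP; exists v => //.
  have nvw : v != w by apply/negP => /eqP evw; move: gv; rewrite evw -gw; lia.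
  have := G1 nvw vi wi; rewrite -gw /natdist; lia.
have := U3 hw (nxt 0 h0 w0) (nxt 1 h1 w1); lia.
Qed.

Lemma lower1 : 1 <= m -> 3 <= r -> (forall v, g v < 2 * r - 2) -> False.
Proof.
move=> m1 r3 hb.
have hs : forall v, v \in ee e 0 -> g v %/ 2 < r.-1.
  by move=> v _; have := hb v; lia.
have [H _] := pigeon (@half_inj 0) hs.
by move: H; rewrite eeS //; lia.
Qed.
End Lower.

Section Upper.
Variables (V : finType) (m r : nat) (e : 'I_m -> {set V}).
Hypothesis Hp : hyperpath_order e.
Hypothesis Hsz : forall i : 'I_m, #|e i| = r.
Hypothesis Hr : 3 <= r.

Definition prev i := if i is i'.+1 then ee e i' else set0.
Definition priv i := ee e i :\: (prev i :|: ee e i.+1).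
Definition slot i v :=
  if v \in prev i then r - 2 else if v \in ee e i.+1 then r - 1 else
  index v (enum (priv i)) + ((0 < i) && (index v (enum (priv i)) == r - 2)).

Lemma prev_pos i v : v \in prev i -> 0 < i.
Proof. by case: i => //; rewrite inE. Qed.

Lemma card_next i : #|ee e i :&: ee e i.+1| = (i.+1 < m).
Proof.
case: (ltnP i.+1 m) => h.
  by have [w ->] := ee_w Hp h; rewrite cards1.
by rewrite (ee0 e h) setI0 cards0.
Qed.

Lemma card_priv i : i < m -> #|priv i| + (0 < i) + (i.+1 < m) = r.
Proof.
move=> im.
have := cardsID (prev i :|: ee e i.+1) (ee e i).
rewrite (eeS Hsz im) setIUr cardsU.
have -> : ee e i :&: prev i :&: (ee e i :&: ee e i.+1) = set0.
  case: i im => [|i] im /=; first by rewrite setI0 set0I.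
  apply/setP => x; rewrite !inE.
  have nn : i.+2 != i.+1 by lia.
  have := ee_disj Hp (leqW (leqnn i.+1)) nn.
  by move/setP/(_ x); rewrite !inE; case: (x \in ee e i); case: (x \in ee e i.+2); rewrite ?andbF.
rewrite cards0 subn0 card_next.
have -> : #|ee e i :&: prev i| = (0 < i).
  case: i im => [|i] im /=; first by rewrite setI0 cards0.
  by rewrite setIC card_next im.
rewrite /priv; lia.
Qed.

Lemma next_lt i v : v \in ee e i.+1 -> i.+1 < m.
Proof. exact: ee_nonempty. Qed.

Lemma slot_cases i v : v \in ee e i ->
  [\/ v \in prev i /\ slot i v = r - 2,
      [/\ v \notin prev i, v \in ee e i.+1 & slot i v = r - 1] |
      [/\ v \in enum (priv i), index v (enum (priv i)) < #|priv i| &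
         slot i v = index v (enum (priv i)) +
           ((0 < i) && (index v (enum (priv i)) == r - 2))]].
Proof.
move=> vi; rewrite /slot.
case: ifP => vp; first by constructor 1.
case: ifP => vn; first by constructor 2; rewrite ?vp.
have vq : v \in enum (priv i) by rewrite mem_enum !inE vp vn vi.
by constructor 3; rewrite // cardE index_mem.
Qed.

Lemma slot_out i x : x \in ee e i -> x \in ee e i.+1 -> slot i x = r - 1.
Proof.
move=> xi xj; rewrite /slot xj; case: ifP => // xp.
case: i xi xj xp => [|i] xi xj /= xp; first by rewrite inE in xp.
have nn : i.+2 != i.+1 by lia.
have := ee_disj Hp (leqW (leqnn i.+1)) nn; move/setP/(_ x).
by rewrite !inE xp xj.
Qed.

Lemma slot_in i x : x \in ee e i -> x \in ee e i.+1 -> slot i.+1 x = r - 2.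
Proof. by move=> xi xj; rewrite /slot /= xi. Qed.

Lemma slot_lt i v : i < m -> v \in ee e i -> slot i v < r.
Proof.
move=> im vi; have cp := card_priv im.
case: (slot_cases vi) => [[_ ->]|[_ _ ->]|[_ kl ->]]; lia.
Qed.

Lemma slot_inj i : i < m -> {in ee e i &, injective (slot i)}.
Proof.
move=> im u v ui vi; have cp := card_priv im.
have shared : forall j x y,
    x \in ee e j -> x \in ee e j.+1 -> y \in ee e j -> y \in ee e j.+1 -> x = y.
  move=> j x y xj xj' yj yj'.
  have [w hw] := ee_w Hp (next_lt xj').
  by rewrite (ee_shared hw xj xj') (ee_shared hw yj yj').
have prev_sh : forall x y, x \in prev i -> y \in prev i ->
    x \in ee e i -> y \in ee e i -> x = y.
  case: i im ui vi {cp} => [|i] im ui vi x y; first by rewrite inE.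
  move=> /= xp yp xi yi; exact: (shared i x y xp xi yp yi).
case: (slot_cases ui) => [[up ->]|[up un ->]|[uq ul ->]];
case: (slot_cases vi) => [[vp ->]|[vp vn ->]|[vq vl ->]] => h.
- exact: prev_sh.
- lia.
- have := prev_pos up; lia.
- lia.
- exact: (shared i u v ui un vi vn).
- have := next_lt un; lia.
- have := prev_pos vp; lia.
- have := next_lt vn; lia.
- have ek : index u (enum (priv i)) = index v (enum (priv i)).
    move: h; case: (posnP i) => [->|ip] /=; first by rewrite !addn0.
    lia.
  by rewrite -(nth_index u uq) ek nth_index.
Qed.
Variable T : nat -> nat -> nat.
Hypothesis T1 : forall i s t, i < m -> s < r -> t < r -> s != t ->
  2 <= natdist (T i s) (T i t).
Hypothesis T2 : forall i, i.+1 < m -> T i (r - 1) = T i.+1 (r - 2).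
Hypothesis T3 : forall i s t, i.+1 < m -> s < r -> t < r ->
  ~~ ((s == r - 1) && (t == r - 2)) -> T i s != T i.+1 t.

Definition col v := if [pick i : 'I_m | v \in e i] is Some i then T i (slot i v) else 0.

Lemma col_eq i v : v \in ee e i -> col v = T i (slot i v).
Proof.
move=> vi; rewrite /col; case: pickP => [j vj | none]; last first.
  have im := ee_nonempty vi.
  by have := none (Ordinal im); rewrite -(eeE e (Ordinal im)) vi.
have vj' : v \in ee e j by rewrite eeE.
case: (ee_cases Hp vi vj') => [<- // | ej | ei].
  rewrite ej; have vj'' : v \in ee e i.+1 by rewrite -ej.
  rewrite (slot_in vi vj'') (slot_out vi vj'') T2 //; exact: next_lt vj''.
have vi'' : v \in ee e j.+1 by rewrite -ei.
rewrite ei (slot_in vj' vi'') (slot_out vj' vi'') T2 //; exact: next_lt vi''.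
Qed.

Lemma ndC a b : natdist a b = natdist b a.
Proof. by rewrite /natdist addnC. Qed.

Lemma col_L21 (E : {set {set V}}) : (forall A, A \in E -> exists i, A = e i) ->
  L21 E col.
Proof.
move=> HEe.
have same : forall i u v, u != v -> u \in ee e i -> v \in ee e i ->
    2 <= natdist (col u) (col v).
  move=> i u v nuv ui vi; have im := ee_nonempty ui.
  rewrite (col_eq ui) (col_eq vi); apply: T1 => //; try exact: slot_lt.
  by apply/negP => /eqP h; move/negP: nuv; apply; apply/eqP; apply: (slot_inj im).
split.
  move=> u v nuv [A AE /andP [uA vA]]; have [i ei] := HEe A AE.
  by apply: (same i u v nuv); rewrite (eeE e i) -ei.
move=> u v nuv [e1 [e2 [e1E e2E ve1 ue2 ne]]].
have [i ei] := HEe e1 e1E; have [j ej] := HEe e2 e2E.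
have [x] := set0Pn _ ne; rewrite !inE negb_or => /andP [/andP [xu xv] /andP [x1 x2]].
rewrite ei -(eeE e i) in ve1 x1; rewrite ej -(eeE e j) in ue2 x2.
case: (ee_cases Hp x1 x2) => [eij | eji | eij].
- rewrite ndC; have := same i v u; rewrite eq_sym nuv ve1 eij ue2 => /(_ isT isT isT).
  lia.
- rewrite eji in ue2 x2.
  have jm := next_lt ue2.
  rewrite (col_eq ve1) (col_eq ue2) ndC.
  have : T i (slot i v) != T i.+1 (slot i.+1 u).
    apply: T3 => //; [exact: slot_lt (ee_nonempty ve1) ve1 | exact: slot_lt jm ue2 |].
    apply/negP => /andP [/eqP hs _].
    have : v = x.
      apply: (slot_inj (ee_nonempty ve1)) => //; by rewrite hs (slot_out x1 x2).
    by move=> evx; move: xv; rewrite evx eqxx.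
  rewrite /natdist => /eqP; lia.
- rewrite eij in ve1 x1.
  have im := next_lt ve1.
  rewrite (col_eq ve1) (col_eq ue2).
  have : T j (slot j u) != T j.+1 (slot j.+1 v).
    apply: T3 => //; [exact: slot_lt (ee_nonempty ue2) ue2 | exact: slot_lt im ve1 |].
    apply/negP => /andP [/eqP hs _].
    have : u = x.
      apply: (slot_inj (ee_nonempty ue2)) => //; by rewrite hs (slot_out x2 x1).
    by move=> eux; move: xu; rewrite eux eqxx.
  rewrite /natdist => /eqP; lia.
Qed.
End Upper.

Ltac splits := repeat match goal with
  | |- context [?a == ?b] => case: (a =P b) => ?
  end.

Definition Ta (r i s : nat) := 2 * s.
Definition Tb (r i s : nat) :=
  if i == 0 then (if s == r - 1 then 0 else 2 * s + 2)
  else (if s == r - 2 then 0 else if s == r - 1 then 2 * r - 1 else 2 * s + 3).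
Definition Tc (r i s : nat) :=
  let p := i %% 4 in
  if s == r - 2 then (if p == 0 then 0 else if p == 1 then 2 * r - 1 else if p == 2 then 1 else 2 * r)
  else if s == r - 1 then (if p == 0 then 2 * r - 1 else if p == 1 then 1 else if p == 2 then 2 * r else 0)
  else (if p == 0 then 2 * s + 2 else if p == 1 then 2 * s + 3 else if p == 2 then 2 * s + 4 else 2 * s + 3).

Lemma Ta1 r i s t : s != t -> 2 <= natdist (Ta r i s) (Ta r i t).
Proof. rewrite /Ta /natdist; lia. Qed.

Lemma Tb1 r i s t : 3 <= r -> s < r -> t < r -> s != t -> 2 <= natdist (Tb r i s) (Tb r i t).
Proof. rewrite /Tb /natdist => *; splits; lia. Qed.

Lemma Tb3 r s t : 3 <= r -> s < r -> t < r -> ~~ ((s == r - 1) && (t == r - 2)) -> Tb r 0 s != Tb r 1 t.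
Proof. rewrite /Tb => *; apply/eqP; splits; lia. Qed.

Lemma Tc1 r i s t : 3 <= r -> s < r -> t < r -> s != t -> 2 <= natdist (Tc r i s) (Tc r i t).
Proof.
rewrite /Tc /natdist => *; have : i %% 4 < 4 by rewrite ltn_mod.
move: (i %% 4) => p hp; case: p hp => [|[|[|[|p]]]] hp //=; splits; lia.
Qed.

Lemma Tc2 r i : 3 <= r -> Tc r i (r - 1) = Tc r i.+1 (r - 2).
Proof.
rewrite /Tc => *.
have h : (i.+1) %% 4 = if i %% 4 == 3 then 0 else (i %% 4).+1 by case: eqP => H; lia.
have : i %% 4 < 4 by rewrite ltn_mod.
rewrite h; move: (i %% 4) => p hp; case: p hp => [|[|[|[|p]]]] hp //=; splits; lia.
Qed.

Lemma Tc3 r i s t : 3 <= r -> s < r -> t < r -> ~~ ((s == r - 1) && (t == r - 2)) ->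
  Tc r i s != Tc r i.+1 t.
Proof.
rewrite /Tc => *; apply/eqP.
have h : (i.+1) %% 4 = if i %% 4 == 3 then 0 else (i %% 4).+1 by case: eqP => H; lia.
have : i %% 4 < 4 by rewrite ltn_mod.
rewrite h; move: (i %% 4) => p hp; case: p hp => [|[|[|[|p]]]] hp //=; splits; lia.
Qed.

Lemma Tc_bound r i s : 3 <= r -> s < r -> Tc r i s <= 2 * r.
Proof.
rewrite /Tc => *; have : i %% 4 < 4 by rewrite ltn_mod.
move: (i %% 4) => p hp; case: p hp => [|[|[|[|p]]]] hp //=; splits; lia.
Qed.

Lemma bigmin_le (V : finType) (f : V -> nat) x v (s : seq V) :
  v \in s -> \big[minn/x]_(i <- s) f i <= f v.
Proof.
elim: s => [|a s IH] //; rewrite inE big_cons => /orP [/eqP -> | vs].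
  exact: geq_minl.
exact: leq_trans (geq_minr _ _) (IH vs).
Qed.

Theorem theorem3p11 (V : finType) (m r : nat) (E : {set {set V}}) :
  3 <= r -> 1 <= m -> is_hyperpath m r E ->
  is_lambda E (if m == 1 then 2 * r - 2 else if m == 2 then 2 * r - 1 else 2 * r).
Proof.
move=> Hr Hm [HE [HA [Hcov [e [HeE [Hinj Hp]]]]]].
have Hsz : forall i, #|e i| = r by move=> i; apply: HA.
have HEe : forall A, A \in E -> exists i, A = e i.
  have eqI : [set e i | i in 'I_m] = E.
    apply/eqP; rewrite eqEcard; apply/andP; split.
      by apply/subsetP => A /imsetP [i _ ->].
    by rewrite card_imset // card_ord HE.
  by move=> A; rewrite -eqI => /imsetP [i _ ->]; exists i.
have cov : forall v, exists i : 'I_m, v \in e i.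
  by move=> v; have [A AE vA] := Hcov v; have [i ei] := HEe A AE; exists i; rewrite -ei.
set K := (if m == 1 then _ else _).
have fmin_le : forall (f : V -> nat) v, fmin f <= f v.
  by move=> f v; apply: bigmin_le; rewrite mem_index_enum.
have fmax_ge : forall (f : V -> nat) v, f v <= fmax f.
  by move=> f v; rewrite /fmax; apply: leq_bigmax.
have low : forall f, L21 E f -> K <= span f.
  move=> f [L1 L2]; rewrite leqNgt; apply/negP => lt.
  pose g := fun v => f v - fmin f.
  have gd : forall u v, natdist (g u) (g v) = natdist (f u) (f v).
    by move=> u v; have := fmin_le f u; have := fmin_le f v; rewrite /g /natdist; lia.
  have G1 : forall i u v, u != v -> u \in ee e i -> v \in ee e i ->
      2 <= natdist (g u) (g v).
    move=> i u v nuv ui vi; have im := ee_nonempty ui.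
    rewrite gd; apply: L1 nuv _; exists (e (Ordinal im)); first exact: HeE.
    by rewrite -(eeE e (Ordinal im)) ui vi.
  have G2 : forall i u v, u != v -> u \in ee e i -> v \in ee e i.+1 ->
      1 <= natdist (g u) (g v).
    move=> i u v nuv ui vi; have im := ee_nonempty vi.
    have im' : i < m by lia.
    have [w hw] := ee_w Hp im.
    have wi : w \in ee e i :&: ee e i.+1 by rewrite hw set11.
    move: wi; rewrite inE => /andP [wi wj].
    case: (eqVneq w u) => [ewu|nwu].
      by have := G1 i.+1 u v nuv; rewrite -ewu wj vi => /(_ isT isT); lia.
    case: (eqVneq w v) => [ewv|nwv].
      by have := G1 i u v nuv; rewrite -ewv wi ui => /(_ isT isT); lia.
    rewrite gd; apply: L2 nuv _.
    exists (e (Ordinal im)), (e (Ordinal im')); split; try exact: HeE.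
    - by rewrite -(eeE e (Ordinal im)).
    - by rewrite -(eeE e (Ordinal im')).
    apply/set0Pn; exists w.
    rewrite -(eeE e (Ordinal im)) -(eeE e (Ordinal im')) !inE wi wj.
    by rewrite (negbTE nwu) (negbTE nwv).
  have gb : forall v, g v < K.
    move=> v; have := fmax_ge f v; have := fmin_le f v; move: lt; rewrite /span /g; lia.
  move: gb; rewrite /K.
  case: ifP => [/eqP m1 | m1] gb.
    by apply: (lower1 Hsz G1 Hm Hr gb).
  move: gb; case: ifP => [/eqP m2 | m2] gb'.
    apply: (lower2 Hp Hsz G1 G2 m2 Hr) => v; have := gb' v; lia.
  have m3 : 2 < m by move/negbT: m1; move/negbT: m2; lia.
  exact: (lower3 Hp Hsz G1 G2 gb' m3 Hr).
have up : forall T : nat -> nat -> nat,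
    (forall i s t, i < m -> s < r -> t < r -> s != t -> 2 <= natdist (T i s) (T i t)) ->
    (forall i, i.+1 < m -> T i (r - 1) = T i.+1 (r - 2)) ->
    (forall i s t, i.+1 < m -> s < r -> t < r ->
       ~~ ((s == r - 1) && (t == r - 2)) -> T i s != T i.+1 t) ->
    (forall i s, i < m -> s < r -> T i s <= K) -> is_lambda E K.
  move=> T t1 t2 t3 tb; split => //.
  have L := col_L21 Hp Hsz Hr t1 t2 t3 HEe.
  exists (col r e T); split => //.
  apply/eqP; rewrite eqn_leq low // andbT.
  have : fmax (col r e T) <= K.
    apply/bigmax_leqP => v _; have [i vi] := cov v.
    rewrite -(eeE e i) in vi.
    rewrite (col_eq Hp Hr t2 vi); apply: tb => //; exact: slot_lt.
  rewrite /span; lia.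
case M1: (m == 1).
  move/eqP: (M1) => m1.
  apply: (up (Ta r)) => //.
  - by move=> i s t _ _ _; exact: Ta1.
  - by move=> i; rewrite m1.
  - by move=> i; rewrite m1.
  - by move=> i s _ sr; rewrite /K M1 /Ta; lia.
case M2: (m == 2).
  move/eqP: (M2) => m2.
  apply: (up (Tb r)) => //.
  - by move=> i s t _; exact: Tb1.
  - move=> i; rewrite m2 => i1; have -> : i = 0 by lia.
    by rewrite /Tb /=; splits; lia.
  - move=> i s t; rewrite m2 => i1; have -> : i = 0 by lia.
    exact: Tb3.
  - by move=> i s _ sr; rewrite /K M1 M2 /Tb; splits; lia.
apply: (up (Tc r)) => //.
- by move=> i s t _; exact: Tc1.
- by move=> i _; exact: Tc2.
- by move=> i s t _; exact: Tc3.
- by move=> i s _ sr; rewrite /K M1 M2; exact: Tc_bound.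
Qed.
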